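(* Let $n\ge 1$ and let $p,q,r$ be nonzero real numbers. If the map $(A,B,C)\mapsto \mathrm{Tr}[A^{q/2}B^pA^{q/2}C^r]$ is jointly convex (respectively jointly concave) on $\mathcal{P}_n\times\mathcal{P}_n\times\mathcal{P}_n$, then the matrix-valued map $(A,B)\mapsto A^{q/2}B^pA^{q/2}$ is jointly operator convex (respectively jointly operator concave) on $\mathcal{P}_n\times\mathcal{P}_n$.
   Context: $\mathcal{P}_n$ denotes the set of $n\times n$ positive definite complex matrices. A map $F:\mathcal{P}_n\times\mathcal{P}_n\to M_n(\mathbb{C})_{\mathrm{sa}}$ is jointly operator convex if $F(\lambda A_1+(1-\lambda)A_2,\lambda B_1+(1-\lambda)B_2)\le \lambda F(A_1,B_1)+(1-\lambda)F(A_2,B_2)$ in the positive semidefinite (Loewner) order for all $A_i,B_i\in\mathcal{P}_n$, $\lambda\in[0,1]$; operator concave is defined with the reversed inequality. *)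

(* Defs.v *)
From Stdlib Require Import Reals ClassicalEpsilon.
From mathcomp Require Import all_boot.

Set Implicit Arguments.
Unset Strict Implicit.
Local Open Scope R_scope.

Record C := mkC { Re : R; Im : R }.
Definition C0 : C := mkC 0 0.
Definition C1 : C := mkC 1 0.
Definition CofR (x : R) : C := mkC x 0.
Definition Cadd (z w : C) : C := mkC (Re z + Re w) (Im z + Im w).
Definition Copp (z : C) : C := mkC (- Re z) (- Im z).
Definition Cmul (z w : C) : C :=
  mkC (Re z * Re w - Im z * Im w) (Re z * Im w + Im z * Re w).
Definition Cconj (z : C) : C := mkC (Re z) (- Im z).

Definition Mat (n : nat) := 'I_n -> 'I_n -> C.
Definition Vec (n : nat) := 'I_n -> C.

Definition Csum (n : nat) (F : 'I_n -> C) : C := \big[Cadd/C0]_(i < n) F i.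

Definition madd n (A B : Mat n) : Mat n := fun i j => Cadd (A i j) (B i j).
Definition mopp n (A : Mat n) : Mat n := fun i j => Copp (A i j).
Definition msub n (A B : Mat n) : Mat n := madd A (mopp B).
Definition mscale n (t : R) (A : Mat n) : Mat n := fun i j => Cmul (CofR t) (A i j).
Definition mmul n (A B : Mat n) : Mat n :=
  fun i j => Csum (fun k => Cmul (A i k) (B k j)).
Definition madj n (A : Mat n) : Mat n := fun i j => Cconj (A j i).
Definition mid n : Mat n := fun i j => if i == j then C1 else C0.
Definition mdiag n (d : 'I_n -> R) : Mat n :=
  fun i j => if i == j then CofR (d i) else C0.
Definition mtrace n (A : Mat n) : C := Csum (fun i => A i i).

Definition quad n (A : Mat n) (x : Vec n) : C :=
  Csum (fun i => Csum (fun j => Cmul (Cconj (x i)) (Cmul (A i j) (x j)))).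

Definition psd n (A : Mat n) : Prop :=
  forall x : Vec n, Im (quad A x) = 0 /\ (0 <= Re (quad A x)).

Definition posdef n (A : Mat n) : Prop :=
  psd A /\ forall x : Vec n, (exists i, x i <> C0) -> (0 < Re (quad A x)).

Definition loewner_le n (A B : Mat n) : Prop := psd (msub B A).

Definition unitary n (U : Mat n) : Prop := mmul (madj U) U = @mid n.

Definition pos_spectral n (A : Mat n) (Ud : Mat n * ('I_n -> R)) : Prop :=
  unitary Ud.1 /\ (forall i, (0 < Ud.2 i)) /\
  A = mmul Ud.1 (mmul (mdiag Ud.2) (madj Ud.1)).

Definition spec_choice n (A : Mat n) : Mat n * ('I_n -> R) :=
  epsilon (inhabits (@mid n, fun _ => 1)) (pos_spectral A).

(* real power A^t of a positive definite matrix, via functional calculus: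
   A^t = U diag(d_i^t) U^*  (independent of the chosen decomposition) *)
Definition mpow n (A : Mat n) (t : R) : Mat n :=
  let Ud := spec_choice A in
  mmul Ud.1 (mmul (mdiag (fun i => Rpower (Ud.2 i) t)) (madj Ud.1)).

Definition mconv n (l : R) (A1 A2 : Mat n) : Mat n :=
  madd (mscale l A1) (mscale (1 - l) A2).

Definition jointly_operator_convex n (F : Mat n -> Mat n -> Mat n) : Prop :=
  forall (A1 A2 B1 B2 : Mat n) (l : R), posdef A1 -> posdef A2 ->
    posdef B1 -> posdef B2 -> (0 <= l <= 1) ->
    loewner_le (F (mconv l A1 A2) (mconv l B1 B2)) (mconv l (F A1 B1) (F A2 B2)).

Definition jointly_operator_concave n (F : Mat n -> Mat n -> Mat n) : Prop :=
  forall (A1 A2 B1 B2 : Mat n) (l : R), posdef A1 -> posdef A2 ->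
    posdef B1 -> posdef B2 -> (0 <= l <= 1) ->
    loewner_le (mconv l (F A1 B1) (F A2 B2)) (F (mconv l A1 A2) (mconv l B1 B2)).

Definition jointly_convex3 n (f : Mat n -> Mat n -> Mat n -> R) : Prop :=
  forall (A1 A2 B1 B2 C1 C2 : Mat n) (l : R), posdef A1 -> posdef A2 ->
    posdef B1 -> posdef B2 -> posdef C1 -> posdef C2 -> (0 <= l <= 1) ->
    (f (mconv l A1 A2) (mconv l B1 B2) (mconv l C1 C2)
      <= l * f A1 B1 C1 + (1 - l) * f A2 B2 C2).

Definition jointly_concave3 n (f : Mat n -> Mat n -> Mat n -> R) : Prop :=
  forall (A1 A2 B1 B2 C1 C2 : Mat n) (l : R), posdef A1 -> posdef A2 ->
    posdef B1 -> posdef B2 -> posdef C1 -> posdef C2 -> (0 <= l <= 1) ->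
    (l * f A1 B1 C1 + (1 - l) * f A2 B2 C2
      <= f (mconv l A1 A2) (mconv l B1 B2) (mconv l C1 C2)).

Definition Phi n (p q : R) (A B : Mat n) : Mat n :=
  mmul (mpow A (q / 2)) (mmul (mpow B p) (mpow A (q / 2))).

(* (A,B,C) |-> Tr[A^{q/2} B^p A^{q/2} C^r]  (real part; the trace is real
   for positive definite arguments) *)
Definition trfun n (p q r : R) (A B C' : Mat n) : R :=
  Re (mtrace (mmul (Phi p q A B) (mpow C' r))).

(* Main.v *)
Require Import Defs.
From Stdlib Require Import Reals Lra ClassicalEpsilon FunctionalExtensionality.
From mathcomp Require Import all_boot all_algebra.
From mathcomp Require Import Rstruct complex spectral sesquilinear.
From mathcomp Require Import ring lra.
Import mathcomp.order.order.Order.TTheory GRing.Theory Num.Theory Num.Def.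
Set Implicit Arguments. Unset Strict Implicit. Unset Printing Implicit Defensive.
Local Open Scope ring_scope.
Local Open Scope sesquilinear_scope.

Definition K := (R : rcfType)[i].
Definition kc (z : Defs.C) : K := (Defs.Re z +i* Defs.Im z)%C.
Definition ck (z : K) : Defs.C := mkC (complex.Re z) (complex.Im z).
Lemma kcK z : ck (kc z) = z. Proof. by case: z. Qed.
Lemma ckK z : kc (ck z) = z. Proof. by case: z. Qed.

Lemma kc_add z w : kc (Cadd z w) = kc z + kc w. Proof. by []. Qed.
Lemma kc_mul z w : kc (Cmul z w) = kc z * kc w. Proof. by []. Qed.
Lemma kc_conj z : kc (Cconj z) = (kc z)^*%C. Proof. by []. Qed.
Lemma kc_opp z : kc (Copp z) = - kc z. Proof. by []. Qed.
Lemma kc0 : kc Defs.C0 = 0. Proof. by []. Qed.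
Lemma kc1 : kc Defs.C1 = 1. Proof. by []. Qed.
Lemma kcR x : kc (CofR x) = x%:C%C. Proof. by []. Qed.
Lemma kc_sum n (F : 'I_n -> Defs.C) : kc (Csum F) = \sum_i kc (F i).
Proof.
rewrite /Csum; apply: (big_morph kc kc_add kc0).
Qed.

Definition Mk n (A : Mat n) : 'M[K]_n := \matrix_(i, j) kc (A i j).
Definition Mc n (A : 'M[K]_n) : Mat n := fun i j => ck (A i j).
Lemma MkK n (A : Mat n) : Mc (Mk A) = A.
Proof. apply: functional_extensionality => i; apply: functional_extensionality => j.
by rewrite /Mc mxE kcK. Qed.
Lemma McK n (A : 'M[K]_n) : Mk (Mc A) = A.
Proof. by apply/matrixP => i j; rewrite mxE ckK. Qed.
Lemma Mk_inj n (A B : Mat n) : Mk A = Mk B -> A = B.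
Proof. by move=> h; rewrite -(MkK A) h MkK. Qed.

Lemma Mk_mul n (A B : Mat n) : Mk (mmul A B) = Mk A *m Mk B.
Proof. apply/matrixP => i j; rewrite !mxE /mmul kc_sum.
by apply: eq_bigr => k _; rewrite kc_mul !mxE. Qed.
Lemma Mk_add n (A B : Mat n) : Mk (madd A B) = Mk A + Mk B.
Proof. by apply/matrixP => i j; rewrite !mxE. Qed.
Lemma Mk_opp n (A : Mat n) : Mk (mopp A) = - Mk A.
Proof. by apply/matrixP => i j; rewrite !mxE. Qed.
Lemma Mk_sub n (A B : Mat n) : Mk (msub A B) = Mk A - Mk B.
Proof. by rewrite /msub Mk_add Mk_opp. Qed.
Lemma Mk_scale n t (A : Mat n) : Mk (mscale t A) = (t%:C)%C *: Mk A.
Proof. by apply/matrixP => i j; rewrite !mxE. Qed.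
Lemma Mk_adj n (A : Mat n) : Mk (madj A) = (Mk A)^t*.
Proof. by apply/matrixP => i j; rewrite !mxE. Qed.
Lemma Mk_id n : Mk (@mid n) = 1%:M.
Proof. apply/matrixP => i j; rewrite !mxE /mid. by case: (i == j). Qed.
Lemma Mk_diag n (d : 'I_n -> R) : Mk (mdiag d) = diag_mx (\row_i ((d i)%:C)%C).
Proof. apply/matrixP => i j; rewrite !mxE /mdiag. case: eqP => [->|]; by rewrite ?eqxx ?mulr1n // => /eqP/negbTE ->; rewrite mulr0n. Qed.
Lemma Mk_trace n (A : Mat n) : kc (mtrace A) = \tr (Mk A).
Proof. rewrite /mtrace kc_sum /mxtrace; apply: eq_bigr => i _; by rewrite mxE. Qed.
Definition vk n (x : Vec n) : 'rV[K]_n := \row_i ((kc (x i))^*)%C.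
Lemma Mk_quad n (A : Mat n) x : kc (quad A x) = (vk x *m Mk A *m (vk x)^t*) 0 0.
Proof.
rewrite -mulmxA /quad kc_sum !mxE; apply: eq_bigr => i _.
rewrite kc_sum !mxE big_distrr /=; apply: eq_bigr => j _.
have cc : forall z : K, conjC ((z^*)%C) = z by move=> z; exact: (conjcK z).
by rewrite !kc_mul kc_conj !mxE cc.
Qed.

Lemma kReE z : complex.Re (kc z) = Defs.Re z. Proof. by []. Qed.
Lemma kImE z : complex.Im (kc z) = Defs.Im z. Proof. by []. Qed.

Lemma psd_of n (A : Mat n) :
  (forall v : 'rV[K]_n, 0 <= (v *m Mk A *m v^t*) 0 0) -> psd A.
Proof.
move=> h x; have := h (vk x); rewrite -Mk_quad lecE /= => /andP[/eqP h1 /RleP h2].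
by split.
Qed.

Lemma vk_neq0 n (x : Vec n) : (exists i, x i <> Defs.C0) -> vk x != 0.
Proof.
case=> i hi; apply/negP => /eqP /rowP /(_ i); rewrite !mxE => h.
apply: hi; have : kc (x i) = 0.
  by rewrite -[kc _]conjcK; rewrite -[(_^*)%C]/(conjC _) h conjC0.
by move/(congr1 ck); rewrite kcK.
Qed.

Lemma posdef_of n (A : Mat n) :
  (forall v : 'rV[K]_n, v != 0 -> 0 < (v *m Mk A *m v^t*) 0 0) -> posdef A.
Proof.
move=> h; split.
  apply: psd_of => v; case: (eqVneq v 0) => [->|/h /ltW //].
  by rewrite !mul0mx mxE.
move=> x /vk_neq0 /h; rewrite -Mk_quad ltcE /= => /andP[_ /RltP]. done.
Qed.

Lemma unitary_sym n (U : 'M[K]_n) : U^t* *m U = 1%:M -> U *m U^t* = 1%:M.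
Proof. exact: mulmx1C. Qed.

Lemma form_diag n (w : 'rV[K]_n) (D : 'rV[K]_n) :
  (w *m diag_mx D *m w^t*) 0 0 = \sum_i D 0 i * (w 0 i * conjC (w 0 i)).
Proof.
rewrite mul_mx_diag !mxE; apply: eq_bigr => i _; rewrite !mxE.
by rewrite mulrC mulrA [_ * D 0 i]mulrC -mulrA mulrC mulrA.
Qed.

Lemma adjM n m p (A : 'M[K]_(n, m)) (B : 'M[K]_(m, p)) : (A *m B)^t* = B^t* *m A^t*.
Proof. by rewrite trmx_mul map_mxM. Qed.
Lemma adjK n m (A : 'M[K]_(n, m)) : A^t*^t* = A.
Proof. by apply/matrixP => i j; rewrite !mxE conjCK. Qed.

Definition dg n (d : 'I_n -> R) : 'rV[K]_n := \row_i ((d i)%:C)%C.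

Lemma spec_form n (U : 'M[K]_n) (d : 'I_n -> R) (v : 'rV[K]_n) :
  (v *m (U *m diag_mx (dg d) *m U^t*) *m v^t*) 0 0 =
  \sum_i ((d i)%:C)%C * ((v *m U) 0 i * conjC ((v *m U) 0 i)).
Proof.
transitivity (((v *m U) *m diag_mx (dg d) *m (v *m U)^t*) 0 0).
  by rewrite adjM !mulmxA.
by rewrite form_diag; apply: eq_bigr => i _; rewrite mxE.
Qed.

Lemma spec_pos n (U : 'M[K]_n) (d : 'I_n -> R) :
  U^t* *m U = 1%:M -> (forall i, Rlt 0 (d i)) -> forall v : 'rV[K]_n, v != 0 ->
  0 < (v *m (U *m diag_mx (dg d) *m U^t*) *m v^t*) 0 0.
Proof.
move=> hU hd v v0; rewrite spec_form.
have w0 : v *m U != 0.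
  apply: contra v0 => /eqP h; apply/eqP.
  by rewrite -(mulmx1 v) -(unitary_sym hU) mulmxA h mul0mx.
have [i wi] : exists i, (v *m U) 0 i != 0.
  case: (pickP (fun i => (v *m U) 0 i != 0)) => [i hi|h]; first by exists i.
  exfalso; move/negP: w0; apply; apply/eqP/rowP => i; rewrite mxE.
  rewrite [RHS]mxE; have := h i; move=> /= /negbFE /eqP; rewrite mxE => ->; done.
have tpos : forall j, 0 <= ((d j)%:C)%C * ((v *m U) 0 j * conjC ((v *m U) 0 j)).
  move=> j; apply: mulr_ge0; first by rewrite ler0c; apply/RleP; left; exact: hd.
  exact: mul_conjC_ge0.
rewrite (bigD1 i) //=; apply: ltr_pwDl; last by apply: sumr_ge0 => j _; exact: tpos.
apply: mulr_gt0; first by rewrite ltcR; apply/RltP; exact: hd.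
by rewrite mul_conjC_gt0.
Qed.

Lemma unitary_k n (U : Mat n) : unitary U -> (Mk U)^t* *m Mk U = 1%:M.
Proof. by rewrite /unitary => h; rewrite -Mk_adj -Mk_mul h Mk_id. Qed.

Lemma Mk_spec n (U : Mat n) d :
  Mk (mmul U (mmul (mdiag d) (madj U))) = Mk U *m diag_mx (dg d) *m (Mk U)^t*.
Proof. by rewrite !Mk_mul Mk_diag Mk_adj mulmxA. Qed.

Lemma posdef_spec n (A : Mat n) Ud : pos_spectral A Ud -> posdef A.
Proof.
case: Ud => U d [/= hU [hd ->]]; apply: posdef_of => v v0.
rewrite Mk_spec; exact: spec_pos (unitary_k hU) hd v v0.
Qed.

Lemma spec_unique n (A : Mat n) U d U' d' (f : R -> R) :
  pos_spectral A (U, d) -> pos_spectral A (U', d') ->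
  mmul U (mmul (mdiag (fun i => f (d i))) (madj U)) =
  mmul U' (mmul (mdiag (fun i => f (d' i))) (madj U')).
Proof.
case=> /= /unitary_k hU [_ hA]; case=> /= /unitary_k hU' [_ hA'].
apply: Mk_inj; rewrite !Mk_spec.
have e : Mk U *m diag_mx (dg d) *m (Mk U)^t* = Mk U' *m diag_mx (dg d') *m (Mk U')^t*.
  by rewrite -!Mk_spec -hA -hA'.
set P := Mk U in hU e *; set P' := Mk U' in hU' e *.
set W := P'^t* *m P.
have eW : diag_mx (dg d') *m W = W *m diag_mx (dg d).
  have := congr1 (fun X => P'^t* *m X *m P) e.
  rewrite !mulmxA hU' mul1mx -!mulmxA hU mulmx1 -/W.
  by rewrite !mulmxA => ->.
have defW : P'^t* *m P = W by [].
clearbody W.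
have eF : diag_mx (dg (fun i => f (d' i))) *m W = W *m diag_mx (dg (fun i => f (d i))).
  apply/matrixP => i j; have := congr1 (fun X : 'M[K]_n => X i j) eW.
  rewrite !mul_diag_mx !mul_mx_diag !mxE => h.
  case: (eqVneq (W i j) 0) => [->|wn]; first by rewrite mulr0 mul0r.
  have : ((d' i)%:C)%C = ((d j)%:C)%C :> K.
    by apply: (mulIf wn); rewrite h mulrC.
  by move/complexI => ->; rewrite mulrC.
transitivity (P' *m P'^t* *m (P *m diag_mx (dg (fun i => f (d i))) *m P^t*)).
  by rewrite (unitary_sym hU') mul1mx.
rewrite !mulmxA -[P' *m _ *m P]mulmxA defW -[P' *m W *m _]mulmxA -eF.
by rewrite -defW !mulmxA -[_ *m P *m P^t*]mulmxA (unitary_sym hU) mulmx1.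
Qed.

Lemma spec_choice_ok n (A : Mat n) Ud : pos_spectral A Ud -> pos_spectral A (spec_choice A).
Proof.
move=> h; rewrite /spec_choice.
exact: (epsilon_spec (inhabits (@mid n, fun _ => 1%R)) (pos_spectral A) (ex_intro _ Ud h)).
Qed.

Lemma mpow_spec n (A : Mat n) U d t : pos_spectral A (U, d) ->
  mpow A t = mmul U (mmul (mdiag (fun i => Rpower (d i) t)) (madj U)).
Proof.
move=> h; have := spec_choice_ok h; rewrite /mpow.
case: (spec_choice A) => U' d' h' /=.
exact: (spec_unique (fun x => Rpower x t) h' h).
Qed.

Definition herm n (X : 'M[K]_n) := X^t* = X.

Lemma herm_mpow n (A : Mat n) t : herm (Mk (mpow A t)).
Proof.
rewrite /herm /mpow Mk_spec !adjM adjK mulmxA; congr (_ *m _ *m _).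
apply/matrixP => i j; rewrite !mxE; case: (eqVneq i j) => [->|ne].
  rewrite ?eqxx /= mulr1n; exact: conjc_real.
try rewrite (negbTE ne); try rewrite eq_sym (negbTE ne); by rewrite /= ?mulr0n ?conjC0.
Qed.

Lemma herm_Phi n p q (A B : Mat n) : herm (Mk (Phi p q A B)).
Proof.
have ha := herm_mpow A (q / 2); have hb := herm_mpow B p.
rewrite /herm /Phi; move: ha hb; set a := mpow A _; set b := mpow B _ => ha hb.
clearbody a b; by rewrite !Mk_mul !adjM ha hb mulmxA.
Qed.

Lemma adjD n (A B : 'M[K]_n) : (A + B)^t* = A^t* + B^t*.
Proof. by apply/matrixP => i j; rewrite !mxE rmorphD. Qed.

Lemma adj_scalarR n (e : R) : ((((e%:C)%C : K)%:M : 'M[K]_n))^t* = ((e%:C)%C)%:M.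
Proof.
apply/matrixP => i j; rewrite !mxE; case: (eqVneq i j) => [_|ne].
  rewrite ?eqxx /= mulr1n; exact: conjc_real.
try rewrite (negbTE ne); try rewrite eq_sym (negbTE ne); by rewrite /= ?mulr0n ?conjC0.
Qed.

Lemma exists_root n (r : R) (v : 'rV[K]_n) (eps : R) : r <> 0%R -> Rlt 0 eps ->
  exists C : Mat n, posdef C /\ Mk (mpow C r) = v^t* *m v + ((eps%:C)%C)%:M.
Proof.
move=> r0 he; set D := _ + _.
have hD : D^t* = D by rewrite /D adjD adjM adjK adj_scalarR.
have nD : D \is normalmx by apply/normalmxP; rewrite hD.
set P := spectralmx D; set sp := spectral_diag D.
have eD : D = invmx P *m diag_mx sp *m P by apply/orthomx_spectralP.
have uP : P *m P^t* = 1%:M := elimT unitarymxP (spectral_unitarymx D).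
have uP' : P^t* *m P = 1%:M := mulmx1C uP.
rewrite invmx_unitary in eD; last exact: spectral_unitarymx.
have esp : diag_mx sp = P *m D *m P^t*.
  by rewrite [in RHS]eD !mulmxA uP mul1mx -mulmxA uP mulmx1.
set w := P *m v^t*.
have eDP : P *m D *m P^t* = w *m w^t* + ((eps%:C)%C)%:M.
  rewrite /D mulmxDr mulmxDl /w adjM adjK !mulmxA; congr (_ + _).
  by rewrite mul_mx_scalar -scalemxAl uP scalemx1.
have spE : forall i, sp 0 i = w i 0 * conjC (w i 0) + (eps%:C)%C.
  move=> i; have := congr1 (fun X : 'M[K]_n => X i i) (etrans esp eDP).
  rewrite !mxE ?eqxx /= ?mulr1n big_ord1 => ->. by rewrite !mxE.
pose d i := (complex.Re (w i 0 * conjC (w i 0)) + eps)%R.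
have dpos : forall i, Rlt 0 (d i).
  move=> i; rewrite /d; case: (w i 0) => a b /=; apply/RltP.
  have : (0 < eps)%R by apply/RltP.
  move=> he'; change (GRing.zero < a * a - b * - b + eps); nra.
have spd : forall i, sp 0 i = ((d i)%:C)%C.
  move=> i; rewrite spE /d; case: (w i 0) => a b /=.
  apply/eqP; rewrite eq_complex /=; apply/andP; split; apply/eqP; ring.
pose U := Mc (P^t*).
have MU : Mk U = P^t* by rewrite McK.
have hU : unitary U.
  by apply: Mk_inj; rewrite Mk_mul Mk_adj MU adjK uP Mk_id.
pose c i := Rpower (d i) (Rinv r).
have cpos : forall i, Rlt 0 (c i) by move=> i; rewrite /c /Rpower; apply: exp_pos.
pose Cm := mmul U (mmul (mdiag c) (madj U)).
have hC : pos_spectral Cm (U, c) by split => //; split.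
exists Cm; split; first exact: posdef_spec hC.
rewrite (mpow_spec r hC) Mk_spec MU adjK.
have -> : (fun i => Rpower (c i) r) = d.
  apply: functional_extensionality => i; rewrite /c Rpower_mult Rinv_l //.
  by rewrite Rpower_1.
have -> : dg d = sp by apply/rowP => i; rewrite mxE spd.
by rewrite -eD.
Qed.

Lemma ReD (a b : K) : complex.Re (a + b) = Rplus (complex.Re a) (complex.Re b).
Proof. by case: a; case: b. Qed.
Lemma ReZ (e : R) (a : K) : complex.Re ((e%:C)%C * a) = Rmult e (complex.Re a).
Proof. case: a => x y /=. change ((e * x - 0 * y) = e * x)%R. ring. Qed.

Section Arith.
Local Open Scope R_scope.
Lemma arith_lemma (a t : R) :
  (forall eps, Rlt 0 eps -> Rle 0 (Rplus a (Rmult eps t))) -> Rle 0 a.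
Proof.
move=> key.
destruct (Rle_lt_dec t 0) as [ht|ht].
  have := key 1 Rlt_0_1; Lra.lra.
destruct (Rle_lt_dec 0 a) as [ha|ha] => //.
have hp : 0 < (- a / 2) * / t.
  apply: Rmult_lt_0_compat; [Lra.lra | exact: Rinv_0_lt_compat].
have := key _ hp.
rewrite Rmult_assoc Rinv_l; last Lra.lra.
Lra.lra.
Qed.
End Arith.

Lemma conj_Im0 (z : K) : conjC z = z -> complex.Im z = 0.
Proof. case: z => a b hb; move: (congr1 (@complex.Im _) hb) => /= hb'. lra. Qed.

Lemma core n (X : 'M[K]_n) r : r <> 0%R -> herm X ->
  (forall C : Mat n, posdef C -> Rle 0 (complex.Re (\tr (X *m Mk (mpow C r))))) ->
  forall v : 'rV[K]_n, 0 <= (v *m X *m v^t*) 0 0.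
Proof.
move=> r0 hX h v; set q := (v *m X *m v^t*) 0 0.
have qI : complex.Im q = 0.
  have e : (v *m X *m v^t*)^t* = v *m X *m v^t* by rewrite !adjM adjK hX mulmxA.
  have := congr1 (fun M : 'M[K]_1 => M 0 0) e; rewrite [in X in X = _ -> _]mxE [in X in X = _ -> _]mxE -/q.
  by apply: conj_Im0.
have key : forall eps, Rlt 0 eps ->
    Rle 0 (Rplus (complex.Re q) (Rmult eps (complex.Re (\tr X)))).
  move=> eps he; have [C [pC eC]] := exists_root v r0 he.
  have := h C pC; rewrite eC mulmxDr mxtraceD mul_mx_scalar mxtraceZ mulmxA mxtrace_mulC.
  rewrite ReD ReZ; congr (Rle _ (Rplus _ _)).
  by rewrite /mxtrace big_ord1 /q mulmxA.
rewrite lecE qI eqxx /=; apply/RleP; exact: arith_lemma key.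
Qed.

Lemma mconv_same n l (C : Mat n) : mconv l C C = C.
Proof.
apply: Mk_inj; apply/matrixP => i j; rewrite /mconv Mk_add !Mk_scale !mxE.
case: (kc (C i j)) => a b; apply/eqP; rewrite eq_complex /=.
have e1 : Rminus (IZR 1) l = (1 - l)%R by [].
rewrite e1; apply/andP; split; apply/eqP; ring.
Qed.

Lemma adjN n (A : 'M[K]_n) : (- A)^t* = - A^t*.
Proof. by apply/matrixP => i j; rewrite !mxE rmorphN. Qed.
Lemma adjZR n (e : R) (A : 'M[K]_n) : (((e%:C)%C : K) *: A)^t* = (e%:C)%C *: A^t*.
Proof. apply/matrixP => i j; rewrite !mxE rmorphM. congr (_ * _); exact: conjc_real. Qed.

Lemma herm_comb n (l m : R) (X1 X2 X3 : 'M[K]_n) : herm X1 -> herm X2 -> herm X3 ->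
  herm ((l%:C)%C *: X1 + (m%:C)%C *: X2 - X3) /\
  herm (- ((l%:C)%C *: X1 + (m%:C)%C *: X2 - X3)).
Proof.
rewrite /herm => h1 h2 h3; split; by rewrite !(adjD, adjN, adjZR) h1 h2 h3.
Qed.

Lemma ReN (a : K) : complex.Re (- a) = Ropp (complex.Re a). Proof. by case: a. Qed.

Lemma tr_lin n (l m : R) (X1 X2 X3 Y : 'M[K]_n) :
  complex.Re (\tr (((l%:C)%C *: X1 + (m%:C)%C *: X2 - X3) *m Y)) =
  Rminus (Rplus (Rmult l (complex.Re (\tr (X1 *m Y))))
                (Rmult m (complex.Re (\tr (X2 *m Y)))))
         (complex.Re (\tr (X3 *m Y))).
Proof.
by rewrite !mulmxDl mulNmx -!scalemxAl !mxtraceD (raddfN (@mxtrace _ _)) !mxtraceZ !ReD ReN !ReZ.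
Qed.

Lemma trN n (X Y : 'M[K]_n) : complex.Re (\tr ((- X) *m Y)) = Ropp (complex.Re (\tr (X *m Y))).
Proof. by rewrite mulNmx (raddfN (@mxtrace _ _)) ReN. Qed.

Lemma trfunE n p q r (A B C : Mat n) :
  trfun p q r A B C = complex.Re (\tr (Mk (Phi p q A B) *m Mk (mpow C r))).
Proof. by rewrite /trfun -kReE Mk_trace Mk_mul. Qed.


Lemma Mk_subN n (X Y : Mat n) : Mk (msub Y X) = - (Mk X - Mk Y).
Proof. by rewrite Mk_sub opprB. Qed.

Local Close Scope ring_scope.
Local Close Scope sesquilinear_scope.
Local Open Scope R_scope.

Theorem lemma3p1 (n : nat) (p q r : R) :
  (1 <= n)%N -> p <> 0 -> q <> 0 -> r <> 0 ->
  (jointly_convex3 (trfun (n:=n) p q r) ->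
     jointly_operator_convex (Phi (n:=n) p q)) /\
  (jointly_concave3 (trfun (n:=n) p q r) ->
     jointly_operator_concave (Phi (n:=n) p q)).
Proof.
move=> _ _ _ r0; split => H A1 A2 B1 B2 l hA1 hA2 hB1 hB2 hl; apply: psd_of.
- rewrite Mk_sub /mconv Mk_add !Mk_scale.
  apply: core r0 _ _; first exact: (herm_comb _ _ (herm_Phi _ _ _ _) (herm_Phi _ _ _ _) (herm_Phi _ _ _ _)).1.
  move=> C hC; rewrite tr_lin.
  have := H A1 A2 B1 B2 C C l hA1 hA2 hB1 hB2 hC hC hl.
  rewrite mconv_same !trfunE /mconv. Lra.lra.
- rewrite Mk_subN.
  rewrite /mconv Mk_add !Mk_scale.
  apply: core r0 _ _; first exact: (herm_comb _ _ (herm_Phi _ _ _ _) (herm_Phi _ _ _ _) (herm_Phi _ _ _ _)).2.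
  move=> C hC; rewrite trN tr_lin.
  have := H A1 A2 B1 B2 C C l hA1 hA2 hB1 hB2 hC hC hl.
  rewrite mconv_same !trfunE /mconv. Lra.lra.
Qed.
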